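(* Consider the Normal Partizan Domination game on a star $K_{1,n}$ whose universal (center) vertex has color $A$, with $a$ leaves of color $A$, $b$ leaves of color $B$ and $c=n-a-b\geq 1$ leaves of color $C$. If $a=0$, the value is $(n-1)\cdot\uparrow$ if $n$ is even and $(n-1)\cdot\uparrow*$ if $n$ is odd. If $a>0$, the value is $J$ if $c$ is even and $J*$ if $c$ is odd, where $J$ is the value of the game on the star obtained by removing the $c$ leaves of color $C$ (keeping all other colors). If instead the universal vertex has color $B$, the value is $-J'$, where $J'$ is the value of the game obtained by interchanging the colors $A$ and $B$ on all vertices.
   Context: Normal Partizan Domination game: a finite graph $G$ has each vertex colored $A$, $B$ or $C$. Alice and Bob alternately select a vertex; Alice may only select vertices colored $A$ or $C$, Bob only vertices colored $B$ or $C$. A vertex $u$ dominates $v$ if $u=v$ or $uv$ is an edge. A vertex may be selected only if it is playable, i.e. it dominates at least one vertex not dominated by the previously selected vertices; the game ends when the selected vertices form a dominating set. Under normal play the player unable to move loses. The game is regarded as a partizan combinatorial game with Alice as Left and Bob as Right, and its value is its value in Conway's combinatorial game theory ($\{X\mid Y\}$ has Left options $X$ and Right options $Y$; $G+H$ is the disjunctive sum; $-G$ swaps Left and Right; $G=H$ iff $G+(-H)$ is a second-player win). Notation: $*=\{0\mid 0\}$; $\uparrow=\{0\mid *\}$; $m\cdot\uparrow$ is the sum of $m$ copies of $\uparrow$ (and $0\cdot\uparrow=0$); $J*$ denotes $J+*$. *)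

(* Defs.v *)
From HB Require Import structures.
From mathcomp Require Import all_boot.
Set Implicit Arguments. Unset Strict Implicit. Unset Printing Implicit Defensive.

Inductive game : Type :=
  Game (nl : nat) (L : 'I_nl -> game) (nr : nat) (R : 'I_nr -> game).

Lemma I0_False : 'I_0 -> False.
Proof. by case. Qed.

Definition no_opt (i : 'I_0) : game := False_rect game (I0_False i).

Definition g0 : game := Game no_opt no_opt.

(* Outcomes under normal play: (Left moving first wins, Right moving first wins). *)
Fixpoint outcome (G : game) : Prop * Prop :=
  match G with
  | Game nl L nr R =>
      ((exists i : 'I_nl, ~ (outcome (L i)).2),
       (exists j : 'I_nr, ~ (outcome (R j)).1))
  end.

Definition left_first_wins (G : game) : Prop := (outcome G).1.
Definition right_first_wins (G : game) : Prop := (outcome G).2.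
Definition second_player_win (G : game) : Prop :=
  ~ left_first_wins G /\ ~ right_first_wins G.

Fixpoint gneg (G : game) : game :=
  match G with
  | Game nl L nr R => Game (fun j => gneg (R j)) (fun i => gneg (L i))
  end.

Fixpoint gadd (G H : game) {struct G} : game :=
  match G with
  | Game nl L nr R =>
      let fix gadd_aux (H : game) : game :=
        match H with
        | Game ml L' mr R' =>
            Game (fun k : 'I_(nl + ml) =>
                    match split k with
                    | inl i => gadd (L i) H
                    | inr i => gadd_aux (L' i)
                    end)
                 (fun k : 'I_(nr + mr) =>
                    match split k with
                    | inl j => gadd (R j) H
                    | inr j => gadd_aux (R' j)
                    end)
        end
      in gadd_aux H
  end.

Definition game_eq (G H : game) : Prop := second_player_win (gadd G (gneg H)).

Definition gstar : game := Game (fun _ : 'I_1 => g0) (fun _ : 'I_1 => g0).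
Definition gup : game := Game (fun _ : 'I_1 => g0) (fun _ : 'I_1 => gstar).
Fixpoint mul_up (m : nat) : game :=
  match m with 0 => g0 | m'.+1 => gadd gup (mul_up m') end.

Inductive colour := CA | CB | CC.

Definition colour_eqb (x y : colour) : bool :=
  match x, y with CA, CA | CB, CB | CC, CC => true | _, _ => false end.
Lemma colour_eqP : Equality.axiom colour_eqb.
Proof. by case; case; constructor. Qed.
HB.instance Definition _ := hasDecEq.Build colour colour_eqP.

(* Alice (Left) may select A or C vertices, Bob (Right) B or C vertices. *)
Definition left_col (c : colour) : bool := c != CB.
Definition right_col (c : colour) : bool := c != CA.

Section Domination.
Variables (V : finType) (adj : rel V) (col : V -> colour) (W : {set V}).
(* The game is played on the subgraph of (V, adj) induced by W. *)

Definition cnbhd (v : V) : {set V} := [set u in W | (u == v) || adj v u].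

(* v is playable when D is the set of already dominated vertices *)
Definition playable (D : {set V}) (v : V) : bool :=
  (v \in W) && ~~ (cnbhd v \subset D).

(* game from position D, with fuel k (each move strictly enlarges D,
   so fuel #|V|.+1 is never exhausted) *)
Fixpoint dom_aux (k : nat) (D : {set V}) : game :=
  match k with
  | 0 => g0
  | k'.+1 =>
      let sL := [seq v <- enum V | playable D v && left_col (col v)] in
      let sR := [seq v <- enum V | playable D v && right_col (col v)] in
      Game (fun i : 'I_(size sL) => dom_aux k' (D :|: cnbhd (tnth (in_tuple sL) i)))
           (fun j : 'I_(size sR) => dom_aux k' (D :|: cnbhd (tnth (in_tuple sR) j)))
  end.

Definition dom_game : game := dom_aux #|V|.+1 set0.
End Domination.

(* K_{1,n}: vertex None is the centre, Some i (i < n) are the leaves. *)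
Definition star_adj (n : nat) : rel (option 'I_n) :=
  fun x y => xorb (x == None) (y == None).

Definition swap_col (c : colour) : colour :=
  match c with CA => CB | CB => CA | CC => CC end.

(* Main.v *)
Require Import Defs.
From mathcomp Require Import all_boot.
From Stdlib Require Import Classical Setoid Morphisms FunctionalExtensionality.
From Stdlib Require List.
From mathcomp Require Import zify.
Set Implicit Arguments. Unset Strict Implicit. Unset Printing Implicit Defensive.

Definition lo (G X : game) : Prop := let: Game _ L _ _ := G in exists i, L i = X.
Definition ro (G X : game) : Prop := let: Game _ _ _ R := G in exists j, R j = X.

Notation lfw := left_first_wins.
Notation rfw := right_first_wins.

Lemma lfwE G : lfw G <-> exists X, lo G X /\ ~ rfw X.
Proof.
case: G => nl L nr R; split.
- by case=> i Hi; exists (L i); split => //; exists i.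
- by case=> X [[i <-] H]; exists i.
Qed.

Lemma rfwE G : rfw G <-> exists X, ro G X /\ ~ lfw X.
Proof.
case: G => nl L nr R; split.
- by case=> i Hi; exists (R i); split => //; exists i.
- by case=> X [[i <-] H]; exists i.
Qed.

Lemma game_ind' (P : game -> Prop) :
  (forall G, (forall X, lo G X -> P X) -> (forall X, ro G X -> P X) -> P G) ->
  forall G, P G.
Proof.
move=> H; elim=> nl L IHL nr R IHR; apply: H.
- by move=> X [i <-].
- by move=> X [i <-].
Qed.

Lemma lo_add G H X : lo (gadd G H) X <->
  (exists G', lo G G' /\ X = gadd G' H) \/ (exists H', lo H H' /\ X = gadd G H').
Proof.
case: G => nl L nr R; case: H => ml L' mr R'; split.
- case=> k <-; case E: (split k) => [i|j].
  + by left; exists (L i); split => //; exists i.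
  + by right; exists (L' j); split => //; exists j.
- case=> [[G' [[i <-] ->]]|[H' [[j <-] ->]]].
  + by exists (lshift ml i); rewrite /= (unsplitK (inl i)).
  + by exists (rshift nl j); rewrite /= (unsplitK (inr j)).
Qed.

Lemma ro_add G H X : ro (gadd G H) X <->
  (exists G', ro G G' /\ X = gadd G' H) \/ (exists H', ro H H' /\ X = gadd G H').
Proof.
case: G => nl L nr R; case: H => ml L' mr R'; split.
- case=> k <-; case E: (split k) => [i|j].
  + by left; exists (R i); split => //; exists i.
  + by right; exists (R' j); split => //; exists j.
- case=> [[G' [[i <-] ->]]|[H' [[j <-] ->]]].
  + by exists (lshift mr i); rewrite /= (unsplitK (inl i)).
  + by exists (rshift nr j); rewrite /= (unsplitK (inr j)).
Qed.

Lemma lo_neg G X : lo (gneg G) X <-> exists Y, ro G Y /\ X = gneg Y.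
Proof.
case: G => nl L nr R; split.
- by case=> i <-; exists (R i); split => //; exists i.
- by case=> Y [[i <-] ->]; exists i.
Qed.

Lemma ro_neg G X : ro (gneg G) X <-> exists Y, lo G Y /\ X = gneg Y.
Proof.
case: G => nl L nr R; split.
- by case=> i <-; exists (L i); split => //; exists i.
- by case=> Y [[i <-] ->]; exists i.
Qed.

Lemma lo_g0 X : ~ lo g0 X.
Proof. by case=> i; case: (I0_False i). Qed.
Lemma ro_g0 X : ~ ro g0 X.
Proof. by case=> i; case: (I0_False i). Qed.

Fixpoint ident (G H : game) : Prop :=
  match G, H with
  | Game _ L _ R, Game _ L' _ R' =>
    (forall i, exists j, ident (L i) (L' j)) /\ (forall j, exists i, ident (L i) (L' j)) /\
    (forall i, exists j, ident (R i) (R' j)) /\ (forall j, exists i, ident (R i) (R' j))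
  end.

Lemma identE G H : ident G H <->
  ((forall X, lo G X -> exists Y, lo H Y /\ ident X Y) /\
   (forall Y, lo H Y -> exists X, lo G X /\ ident X Y) /\
   (forall X, ro G X -> exists Y, ro H Y /\ ident X Y) /\
   (forall Y, ro H Y -> exists X, ro G X /\ ident X Y)).
Proof.
case: G => nl L nr R; case: H => ml L' mr R' /=; split.
- case=> [h1 [h2 [h3 h4]]]; split; [|split; [|split]].
  + by move=> X [i <-]; case: (h1 i) => j hj; exists (L' j); split => //; exists j.
  + by move=> X [j <-]; case: (h2 j) => i hi; exists (L i); split => //; exists i.
  + by move=> X [i <-]; case: (h3 i) => j hj; exists (R' j); split => //; exists j.
  + by move=> X [j <-]; case: (h4 j) => i hi; exists (R i); split => //; exists i.
- case=> [h1 [h2 [h3 h4]]]; split; [|split; [|split]].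
  + by move=> i; case: (h1 (L i)) => [|Y [[j <-] h]]; [exists i|exists j].
  + by move=> j; case: (h2 (L' j)) => [|Y [[i <-] h]]; [exists j|exists i].
  + by move=> i; case: (h3 (R i)) => [|Y [[j <-] h]]; [exists i|exists j].
  + by move=> j; case: (h4 (R' j)) => [|Y [[i <-] h]]; [exists j|exists i].
Qed.

Lemma ident_refl G : ident G G.
Proof.
elim/game_ind': G => G IL IR; apply/identE; split; [|split; [|split]].
- by move=> X h; exists X; split => //; apply: IL.
- by move=> X h; exists X; split => //; apply: IL.
- by move=> X h; exists X; split => //; apply: IR.
- by move=> X h; exists X; split => //; apply: IR.
Qed.

Lemma ident_sym G H : ident G H -> ident H G.
Proof.
elim/game_ind': G H => G IL IR H /identE [h1 [h2 [h3 h4]]].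
apply/identE; split; [|split; [|split]].
- by move=> Y /h2 [X [hX hXY]]; exists X; split => //; apply: IL.
- by move=> X hX; case: (h1 X hX) => Y [hY hXY]; exists Y; split => //; apply: IL.
- by move=> Y /h4 [X [hX hXY]]; exists X; split => //; apply: IR.
- by move=> X hX; case: (h3 X hX) => Y [hY hXY]; exists Y; split => //; apply: IR.
Qed.

Lemma ident_trans G H K : ident G H -> ident H K -> ident G K.
Proof.
elim/game_ind': G H K => G IL IR H K /identE [h1 [h2 [h3 h4]]] /identE [k1 [k2 [k3 k4]]].
apply/identE; split; [|split; [|split]].
- move=> X /[dup] hX /h1 [Y [/k1 [Z [hZ hYZ]] hXY]]; exists Z; split => //; exact: IL hXY hYZ.
- move=> Z /k2 [Y [/h2 [X [hX hXY]] hYZ]]; exists X; split => //; exact: IL hXY hYZ.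
- move=> X /[dup] hX /h3 [Y [/k3 [Z [hZ hYZ]] hXY]]; exists Z; split => //; exact: IR hXY hYZ.
- move=> Z /k4 [Y [/h4 [X [hX hXY]] hYZ]]; exists X; split => //; exact: IR hXY hYZ.
Qed.

Lemma ident_out G H : ident G H -> (lfw G <-> lfw H) /\ (rfw G <-> rfw H).
Proof.
elim/game_ind': G H => G IL IR H /identE [h1 [h2 [h3 h4]]]; split.
- rewrite !lfwE; split.
  + case=> X [/[dup] hX /h1 [Y [hY hXY]] nX]; exists Y; split => //.
    by have [_ <-] := IL X hX Y hXY.
  + case=> Y [/h2 [X [hX hXY]] nY]; exists X; split => //.
    by have [_ ->] := IL X hX Y hXY.
- rewrite !rfwE; split.
  + case=> X [/[dup] hX /h3 [Y [hY hXY]] nX]; exists Y; split => //.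
    by have [<- _] := IR X hX Y hXY.
  + case=> Y [/h4 [X [hX hXY]] nY]; exists X; split => //.
    by have [-> _] := IR X hX Y hXY.
Qed.

Lemma identI G H :
   (forall X, lo G X -> exists Y, lo H Y /\ ident X Y) ->
   (forall Y, lo H Y -> exists X, lo G X /\ ident X Y) ->
   (forall X, ro G X -> exists Y, ro H Y /\ ident X Y) ->
   (forall Y, ro H Y -> exists X, ro G X /\ ident X Y) -> ident G H.
Proof. by move=> h1 h2 h3 h4; apply/identE. Qed.

Lemma ident_add G G' H H' : ident G G' -> ident H H' -> ident (gadd G H) (gadd G' H').
Proof.
elim/game_ind': G G' H H' => G IGL IGR G' H.
elim/game_ind': H => H IHL IHR H' hG hH.
have /identE [g1 [g2 [g3 g4]]] := hG; have /identE [k1 [k2 [k3 k4]]] := hH.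
apply: identI.
- move=> X /lo_add [[A [hA ->]]|[A [hA ->]]].
  + case: (g1 A hA) => B [hB hAB]; exists (gadd B H'); split; last exact: IGL.
    by apply/lo_add; left; exists B.
  + case: (k1 A hA) => B [hB hAB]; exists (gadd G' B); split; last exact: IHL.
    by apply/lo_add; right; exists B.
- move=> X /lo_add [[B [hB ->]]|[B [hB ->]]].
  + case: (g2 B hB) => A [hA hAB]; exists (gadd A H); split; last exact: IGL.
    by apply/lo_add; left; exists A.
  + case: (k2 B hB) => A [hA hAB]; exists (gadd G A); split; last exact: IHL.
    by apply/lo_add; right; exists A.
- move=> X /ro_add [[A [hA ->]]|[A [hA ->]]].
  + case: (g3 A hA) => B [hB hAB]; exists (gadd B H'); split; last exact: IGR.
    by apply/ro_add; left; exists B.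
  + case: (k3 A hA) => B [hB hAB]; exists (gadd G' B); split; last exact: IHR.
    by apply/ro_add; right; exists B.
- move=> X /ro_add [[B [hB ->]]|[B [hB ->]]].
  + case: (g4 B hB) => A [hA hAB]; exists (gadd A H); split; last exact: IGR.
    by apply/ro_add; left; exists A.
  + case: (k4 B hB) => A [hA hAB]; exists (gadd G A); split; last exact: IHR.
    by apply/ro_add; right; exists A.
Qed.

Lemma ident_neg G H : ident G H -> ident (gneg G) (gneg H).
Proof.
elim/game_ind': G H => G IL IR H /identE [g1 [g2 [g3 g4]]].
apply: identI.
- move=> X /lo_neg [A [hA ->]]; case: (g3 A hA) => B [hB hAB].
  by exists (gneg B); split; [apply/lo_neg; exists B | exact: IR].
- move=> X /lo_neg [B [hB ->]]; case: (g4 B hB) => A [hA hAB].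
  by exists (gneg A); split; [apply/lo_neg; exists A | exact: IR].
- move=> X /ro_neg [A [hA ->]]; case: (g1 A hA) => B [hB hAB].
  by exists (gneg B); split; [apply/ro_neg; exists B | exact: IL].
- move=> X /ro_neg [B [hB ->]]; case: (g2 B hB) => A [hA hAB].
  by exists (gneg A); split; [apply/ro_neg; exists A | exact: IL].
Qed.

Lemma add_comm G H : ident (gadd G H) (gadd H G).
Proof.
elim/game_ind': G H => G IGL IGR H.
elim/game_ind': H => H IHL IHR.
apply: identI.
- move=> X /lo_add [[A [hA ->]]|[A [hA ->]]].
  + by exists (gadd H A); split; [apply/lo_add; right; exists A|exact: IGL].
  + by exists (gadd A G); split; [apply/lo_add; left; exists A|exact: IHL].
- move=> X /lo_add [[A [hA ->]]|[A [hA ->]]].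
  + by exists (gadd G A); split; [apply/lo_add; right; exists A|exact: IHL].
  + by exists (gadd A H); split; [apply/lo_add; left; exists A|exact: IGL].
- move=> X /ro_add [[A [hA ->]]|[A [hA ->]]].
  + by exists (gadd H A); split; [apply/ro_add; right; exists A|exact: IGR].
  + by exists (gadd A G); split; [apply/ro_add; left; exists A|exact: IHR].
- move=> X /ro_add [[A [hA ->]]|[A [hA ->]]].
  + by exists (gadd G A); split; [apply/ro_add; right; exists A|exact: IHR].
  + by exists (gadd A H); split; [apply/ro_add; left; exists A|exact: IGR].
Qed.

Lemma add_assoc G H K : ident (gadd (gadd G H) K) (gadd G (gadd H K)).
Proof.
elim/game_ind': G H K => G IGL IGR H.
elim/game_ind': H => H IHL IHR K.
elim/game_ind': K => K IKL IKR.
apply: identI.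
- move=> X /lo_add [[A [/lo_add [[B [hB ->]]|[B [hB ->]]] ->]]|[A [hA ->]]].
  + exists (gadd B (gadd H K)); split; last exact: IGL.
    by apply/lo_add; left; exists B.
  + exists (gadd G (gadd B K)); split; last exact: IHL.
    by apply/lo_add; right; exists (gadd B K); split => //; apply/lo_add; left; exists B.
  + exists (gadd G (gadd H A)); split; last exact: IKL.
    by apply/lo_add; right; exists (gadd H A); split => //; apply/lo_add; right; exists A.
- move=> X /lo_add [[A [hA ->]]|[A [/lo_add [[B [hB ->]]|[B [hB ->]]] ->]]].
  + exists (gadd (gadd A H) K); split; last exact: IGL.
    by apply/lo_add; left; exists (gadd A H); split => //; apply/lo_add; left; exists A.
  + exists (gadd (gadd G B) K); split; last exact: IHL.
    by apply/lo_add; left; exists (gadd G B); split => //; apply/lo_add; right; exists B.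
  + exists (gadd (gadd G H) B); split; last exact: IKL.
    by apply/lo_add; right; exists B.
- move=> X /ro_add [[A [/ro_add [[B [hB ->]]|[B [hB ->]]] ->]]|[A [hA ->]]].
  + exists (gadd B (gadd H K)); split; last exact: IGR.
    by apply/ro_add; left; exists B.
  + exists (gadd G (gadd B K)); split; last exact: IHR.
    by apply/ro_add; right; exists (gadd B K); split => //; apply/ro_add; left; exists B.
  + exists (gadd G (gadd H A)); split; last exact: IKR.
    by apply/ro_add; right; exists (gadd H A); split => //; apply/ro_add; right; exists A.
- move=> X /ro_add [[A [hA ->]]|[A [/ro_add [[B [hB ->]]|[B [hB ->]]] ->]]].
  + exists (gadd (gadd A H) K); split; last exact: IGR.
    by apply/ro_add; left; exists (gadd A H); split => //; apply/ro_add; left; exists A.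
  + exists (gadd (gadd G B) K); split; last exact: IHR.
    by apply/ro_add; left; exists (gadd G B); split => //; apply/ro_add; right; exists B.
  + exists (gadd (gadd G H) B); split; last exact: IKR.
    by apply/ro_add; right; exists B.
Qed.

Lemma neg_add G H : ident (gneg (gadd G H)) (gadd (gneg G) (gneg H)).
Proof.
elim/game_ind': G H => G IGL IGR H.
elim/game_ind': H => H IHL IHR.
apply: identI.
- move=> X /lo_neg [Y [/ro_add [[A [hA ->]]|[A [hA ->]]] ->]].
  + exists (gadd (gneg A) (gneg H)); split; last exact: IGR.
    by apply/lo_add; left; exists (gneg A); split => //; apply/lo_neg; exists A.
  + exists (gadd (gneg G) (gneg A)); split; last exact: IHR.
    by apply/lo_add; right; exists (gneg A); split => //; apply/lo_neg; exists A.
- move=> X /lo_add [[Y [/lo_neg [A [hA ->]] ->]]|[Y [/lo_neg [A [hA ->]] ->]]].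
  + exists (gneg (gadd A H)); split; last exact: IGR.
    by apply/lo_neg; exists (gadd A H); split => //; apply/ro_add; left; exists A.
  + exists (gneg (gadd G A)); split; last exact: IHR.
    by apply/lo_neg; exists (gadd G A); split => //; apply/ro_add; right; exists A.
- move=> X /ro_neg [Y [/lo_add [[A [hA ->]]|[A [hA ->]]] ->]].
  + exists (gadd (gneg A) (gneg H)); split; last exact: IGL.
    by apply/ro_add; left; exists (gneg A); split => //; apply/ro_neg; exists A.
  + exists (gadd (gneg G) (gneg A)); split; last exact: IHL.
    by apply/ro_add; right; exists (gneg A); split => //; apply/ro_neg; exists A.
- move=> X /ro_add [[Y [/ro_neg [A [hA ->]] ->]]|[Y [/ro_neg [A [hA ->]] ->]]].
  + exists (gneg (gadd A H)); split; last exact: IGL.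
    by apply/ro_neg; exists (gadd A H); split => //; apply/lo_add; left; exists A.
  + exists (gneg (gadd G A)); split; last exact: IHL.
    by apply/ro_neg; exists (gadd G A); split => //; apply/lo_add; right; exists A.
Qed.

Lemma neg_neg G : ident (gneg (gneg G)) G.
Proof.
elim/game_ind': G => G IL IR; apply: identI.
- move=> X /lo_neg [Y [/ro_neg [A [hA ->]] ->]]; by exists A; split => //; apply: IL.
- move=> A hA; exists (gneg (gneg A)); split; last exact: IL.
  by apply/lo_neg; exists (gneg A); split => //; apply/ro_neg; exists A.
- move=> X /ro_neg [Y [/lo_neg [A [hA ->]] ->]]; by exists A; split => //; apply: IR.
- move=> A hA; exists (gneg (gneg A)); split; last exact: IR.
  by apply/ro_neg; exists (gneg A); split => //; apply/lo_neg; exists A.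
Qed.

Lemma add0 G : ident (gadd G g0) G.
Proof.
elim/game_ind': G => G IL IR; apply: identI.
- move=> X /lo_add [[A [hA ->]]|[A [/lo_g0 //]]]; by exists A; split => //; apply: IL.
- move=> A hA; exists (gadd A g0); split; last exact: IL.
  by apply/lo_add; left; exists A.
- move=> X /ro_add [[A [hA ->]]|[A [/ro_g0 //]]]; by exists A; split => //; apply: IR.
- move=> A hA; exists (gadd A g0); split; last exact: IR.
  by apply/ro_add; left; exists A.
Qed.

Lemma neg0 : ident (gneg g0) g0.
Proof.
apply: identI.
- by move=> X /lo_neg [Y [/ro_g0]].
- by move=> X /lo_g0.
- by move=> X /ro_neg [Y [/lo_g0]].
- by move=> X /ro_g0.
Qed.

Lemma out_neg G : (lfw (gneg G) <-> rfw G) /\ (rfw (gneg G) <-> lfw G).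
Proof.
elim/game_ind': G => G IL IR; split.
- rewrite lfwE rfwE; split.
  + case=> X [/lo_neg [Y [hY ->]] h]; exists Y; split => //.
    by move=> hh; apply: h; apply/(proj2 (IR Y hY)).
  + case=> Y [hY h]; exists (gneg Y); split; first by apply/lo_neg; exists Y.
    by move/(proj2 (IR Y hY)).
- rewrite rfwE lfwE; split.
  + case=> X [/ro_neg [Y [hY ->]] h]; exists Y; split => //.
    by move=> hh; apply: h; apply/(proj1 (IL Y hY)).
  + case=> Y [hY h]; exists (gneg Y); split; first by apply/ro_neg; exists Y.
    by move/(proj1 (IL Y hY)).
Qed.

Definition ge0 G := ~ rfw G.
Definition le0 G := ~ lfw G.

Lemma ge0E G : ge0 G <-> forall Z, ro G Z -> lfw Z.
Proof.
rewrite /ge0 rfwE; split.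
- by move=> h Z hZ; apply: NNPP => hn; apply: h; exists Z.
- by move=> h [Z [hZ hn]]; apply: hn; apply: h.
Qed.

Lemma le0E G : le0 G <-> forall Z, lo G Z -> rfw Z.
Proof.
rewrite /le0 lfwE; split.
- by move=> h Z hZ; apply: NNPP => hn; apply: h; exists Z.
- by move=> h [Z [hZ hn]]; apply: hn; apply: h.
Qed.

Lemma ident_ge0 G H : ident G H -> ge0 G -> ge0 H.
Proof. by move=> /ident_out [_ h]; rewrite /ge0 h. Qed.
Lemma ident_le0 G H : ident G H -> le0 G -> le0 H.
Proof. by move=> /ident_out [h _]; rewrite /le0 h. Qed.
Lemma ident_lfw G H : ident G H -> lfw G -> lfw H.
Proof. by move=> /ident_out [h _]; rewrite h. Qed.
Lemma ident_rfw G H : ident G H -> rfw G -> rfw H.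
Proof. by move=> /ident_out [_ h]; rewrite h. Qed.

Lemma sum_pos G H :
  (ge0 G -> ge0 H -> ge0 (gadd G H)) /\
  (lfw G -> ge0 H -> lfw (gadd G H)) /\
  (ge0 G -> lfw H -> lfw (gadd G H)).
Proof.
elim/game_ind': G H => G IGL IGR H.
elim/game_ind': H => H IHL IHR; split; [|split].
- move=> /ge0E hG /ge0E hH; apply/ge0E => Z /ro_add [[A [hA ->]]|[A [hA ->]]].
  + have [_ [h _]] := IGR A hA H; apply: h; [exact: hG|exact/ge0E].
  + have [_ [_ h]] := IHR A hA; apply: h; [exact/ge0E|exact: hH].
- move=> /lfwE [A [hA nA]] hH; apply/lfwE; exists (gadd A H); split.
  + by apply/lo_add; left; exists A.
  + by have [h _] := IGL A hA H; apply: h.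
- move=> hG /lfwE [A [hA nA]]; apply/lfwE; exists (gadd G A); split.
  + by apply/lo_add; right; exists A.
  + by have [h _] := IHL A hA; apply: h.
Qed.

Lemma lfw_neg G : lfw (gneg G) <-> rfw G.
Proof. exact: (proj1 (out_neg G)). Qed.
Lemma rfw_neg G : rfw (gneg G) <-> lfw G.
Proof. exact: (proj2 (out_neg G)). Qed.
Lemma ge0_neg G : ge0 (gneg G) <-> le0 G.
Proof. by rewrite /ge0 /le0 rfw_neg. Qed.
Lemma le0_neg G : le0 (gneg G) <-> ge0 G.
Proof. by rewrite /ge0 /le0 lfw_neg. Qed.

Lemma sum_neg G H :
  (le0 G -> le0 H -> le0 (gadd G H)) /\
  (rfw G -> le0 H -> rfw (gadd G H)) /\
  (le0 G -> rfw H -> rfw (gadd G H)).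
Proof.
have [h1 [h2 h3]] := sum_pos (gneg G) (gneg H).
have hi := ident_sym (neg_add G H).
split; [|split].
- move=> a b; apply/ge0_neg; apply: ident_ge0 hi _.
  by apply: h1; apply/ge0_neg.
- move=> a b; apply/lfw_neg; apply: ident_lfw hi _.
  by apply: h2; [apply/lfw_neg|apply/ge0_neg].
- move=> a b; apply/lfw_neg; apply: ident_lfw hi _.
  by apply: h3; [apply/ge0_neg|apply/lfw_neg].
Qed.

Lemma mirror G : ge0 (gadd G (gneg G)) /\ le0 (gadd G (gneg G)).
Proof.
elim/game_ind': G => G IL IR; split.
- apply/ge0E => Z /ro_add [[A [hA ->]]|[B [/ro_neg [A [hA ->]] ->]]].
  + apply/lfwE; exists (gadd A (gneg A)); split; last exact: (proj1 (IR A hA)).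
    by apply/lo_add; right; exists (gneg A); split => //; apply/lo_neg; exists A.
  + apply/lfwE; exists (gadd A (gneg A)); split; last exact: (proj1 (IL A hA)).
    by apply/lo_add; left; exists A.
- apply/le0E => Z /lo_add [[A [hA ->]]|[B [/lo_neg [A [hA ->]] ->]]].
  + apply/rfwE; exists (gadd A (gneg A)); split; last exact: (proj2 (IL A hA)).
    by apply/ro_add; right; exists (gneg A); split => //; apply/ro_neg; exists A.
  + apply/rfwE; exists (gadd A (gneg A)); split; last exact: (proj2 (IR A hA)).
    by apply/ro_add; left; exists A.
Qed.

Definition le G H := ge0 (gadd H (gneg G)).

Lemma ident_le G G' H H' : ident G G' -> ident H H' -> le G H -> le G' H'.
Proof.
move=> hG hH; apply: ident_ge0; apply: ident_add => //; exact: ident_neg.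
Qed.

Lemma medial a b c d : ident (gadd (gadd a b) (gadd c d)) (gadd (gadd a c) (gadd b d)).
Proof.
apply: ident_trans (add_assoc _ _ _) _.
apply: ident_trans _ (ident_sym (add_assoc _ _ _)).
apply: ident_add; first exact: ident_refl.
apply: ident_trans (ident_sym (add_assoc _ _ _)) _.
apply: ident_trans _ (add_assoc _ _ _).
apply: ident_add; last exact: ident_refl.
exact: add_comm.
Qed.

Lemma neg_sub A B : ident (gneg (gadd A (gneg B))) (gadd B (gneg A)).
Proof.
apply: ident_trans (neg_add _ _) _.
apply: ident_trans (add_comm _ _) _.
apply: ident_add; [exact: neg_neg|exact: ident_refl].
Qed.

Lemma le0_sub A B : le0 (gadd A (gneg B)) <-> le A B.
Proof.
rewrite -ge0_neg; split; apply: ident_ge0; first exact: neg_sub.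
exact: ident_sym (neg_sub _ _).
Qed.

Lemma lfw_sub A B : lfw (gadd A (gneg B)) <-> ~ le A B.
Proof.
rewrite -le0_sub /le0; split; first by move=> h; apply.
exact: NNPP.
Qed.

Lemma leE G H : le G H <-> (forall X, lo G X -> ~ le H X) /\ (forall Y, ro H Y -> ~ le Y G).
Proof.
rewrite /le ge0E; split.
- move=> h; split.
  + move=> X hX; apply/lfw_sub; apply: h; apply/ro_add; right; exists (gneg X).
    by split => //; apply/ro_neg; exists X.
  + move=> Y hY; apply/lfw_sub; apply: h; apply/ro_add; left; exists Y.
    by split.
- case=> h1 h2 Z /ro_add [[Y [hY ->]]|[W [/ro_neg [X [hX ->]] ->]]].
  + by apply/lfw_sub; apply: h2.
  + by apply/lfw_sub; apply: h1.
Qed.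

Lemma le_refl G : le G G.
Proof. exact: (proj1 (mirror G)). Qed.

Lemma le_trans G H K : le G H -> le H K -> le G K.
Proof.
move=> h1 h2.
have hs := (proj1 (sum_pos _ _)) h2 h1.
have hi : ident (gadd (gadd K (gneg H)) (gadd H (gneg G)))
                (gadd (gadd K (gneg G)) (gadd H (gneg H))).
  apply: ident_trans (medial _ _ _ _) _.
  apply: ident_trans _ (ident_sym (medial _ _ _ _)).
  apply: ident_add; first exact: ident_refl.
  exact: add_comm.
have := ident_ge0 hi hs.
rewrite /le; move=> hh; apply: NNPP => hn.
have := (proj1 (proj2 (sum_neg _ _))) (NNPP _ hn) (proj2 (mirror H)).
exact: hh.
Qed.

Lemma le_addr G G' H : le G G' -> le (gadd G H) (gadd G' H).
Proof.
move=> h; rewrite /le.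
have hs := (proj1 (sum_pos _ _)) h (@le_refl H).
apply: ident_ge0 hs.
apply: ident_trans (medial _ _ _ _) _.
apply: ident_add; first exact: ident_refl.
exact: ident_sym (neg_add _ _).
Qed.

Lemma le_addl G H H' : le H H' -> le (gadd G H) (gadd G H').
Proof.
move=> h; apply: ident_le (add_comm _ _) (add_comm _ _) _.
exact: le_addr.
Qed.

Definition eqg G H := le G H /\ le H G.

Lemma eqg_refl G : eqg G G. Proof. split; exact: le_refl. Qed.
Lemma eqg_sym G H : eqg G H -> eqg H G. Proof. by case. Qed.
Lemma eqg_trans G H K : eqg G H -> eqg H K -> eqg G K.
Proof. by case=> a b [c d]; split; [apply: le_trans a c|apply: le_trans d b]. Qed.

#[global] Instance eqg_Equiv : Equivalence eqg.
Proof. split; [exact: eqg_refl|exact: eqg_sym|exact: eqg_trans]. Qed.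

#[global] Instance le_proper : Proper (eqg ==> eqg ==> iff) le.
Proof.
move=> G G' [a b] H H' [c d]; split => h.
- exact: le_trans b (le_trans h c).
- exact: le_trans a (le_trans h d).
Qed.

#[global] Instance le_Pre : PreOrder le.
Proof. split; [exact: le_refl|move=> ???; exact: le_trans]. Qed.

#[global] Instance add_proper : Proper (eqg ==> eqg ==> eqg) gadd.
Proof.
move=> G G' [a b] H H' [c d]; split.
- exact: le_trans (le_addr a) (le_addl c).
- exact: le_trans (le_addr b) (le_addl d).
Qed.

Lemma ident_eqg G H : ident G H -> eqg G H.
Proof.
move=> h; split.
- exact: ident_le (ident_refl G) h (@le_refl G).
- exact: ident_le h (ident_refl G) (@le_refl G).
Qed.

Lemma game_eqE G H : game_eq G H <-> eqg G H.
Proof.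
rewrite /game_eq /second_player_win /eqg -/(le H G).
split.
- case=> h1 h2; split => //; exact/le0_sub.
- case=> h1 h2; split => //; exact/le0_sub.
Qed.

Lemma lo_not_le G X : lo G X -> ~ le G X.
Proof. by move=> hX /leE [h _]; apply: (h X hX); exact: le_refl. Qed.
Lemma ro_not_le G X : ro G X -> ~ le X G.
Proof. by move=> hX /leE [_ h]; apply: (h X hX); exact: le_refl. Qed.
Lemma lo_nle G X Y : lo G Y -> le X Y -> ~ le G X.
Proof. by move=> hY hXY hGX; apply: lo_not_le hY (le_trans hGX hXY). Qed.
Lemma ro_nle G X Y : ro G Y -> le Y X -> ~ le X G.
Proof. by move=> hY hYX hXG; apply: ro_not_le hY (le_trans hYX hXG). Qed.

Lemma leI G H : (forall X, lo G X -> ~ le H X) -> (forall Y, ro H Y -> ~ le Y G) -> le G H.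
Proof. by move=> h1 h2; apply/leE. Qed.

Lemma add_g0 G : eqg (gadd G g0) G. Proof. exact: ident_eqg (add0 G). Qed.
Lemma g0_add G : eqg (gadd g0 G) G.
Proof. exact: ident_eqg (ident_trans (add_comm _ _) (add0 G)). Qed.
Lemma addC G H : eqg (gadd G H) (gadd H G). Proof. exact: ident_eqg (add_comm G H). Qed.
Lemma addA G H K : eqg (gadd (gadd G H) K) (gadd G (gadd H K)).
Proof. exact: ident_eqg (add_assoc G H K). Qed.
Lemma subg G : eqg (gadd G (gneg G)) g0.
Proof.
split.
- rewrite /le; apply: ident_ge0 (proj1 (mirror G)).
  apply: ident_sym; apply: ident_trans (add_comm _ _) _.
  apply: ident_trans (add0 _) _; exact: neg_sub.
- rewrite /le; apply: ident_ge0 (proj1 (mirror G)).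
  apply: ident_sym; apply: ident_trans (ident_add (ident_refl _) neg0) _.
  exact: add0.
Qed.

#[global] Hint Resolve le_refl : core.

Fixpoint Ug (k : nat) : game :=
  match k with 0 => g0 | k'.+1 => Game (fun _ : 'I_1 => g0) (fun _ : 'I_1 => Ug k') end.

Lemma lo1 A B X : lo (Game (fun _ : 'I_1 => A) (fun _ : 'I_1 => B)) X <-> X = A.
Proof. by split; [case=> i <-|move=> ->; exists ord0]. Qed.
Lemma ro1 A B X : ro (Game (fun _ : 'I_1 => A) (fun _ : 'I_1 => B)) X <-> X = B.
Proof. by split; [case=> i <-|move=> ->; exists ord0]. Qed.

Lemma loU k X : lo (Ug k.+1) X <-> X = g0. Proof. exact: lo1. Qed.
Lemma roU k X : ro (Ug k.+1) X <-> X = Ug k. Proof. exact: ro1. Qed.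

Lemma U1 k : ~ le (Ug k.+1) g0.
Proof. apply: lo_not_le; exact/loU. Qed.

Lemma U3 j : (forall d, le (Ug j) (Ug (j + d.+2))) /\ (forall e, ~ le (Ug (j + e.+1)) (Ug j)).
Proof.
elim: j => [|j [IL IM]].
- have hM : forall e, ~ le (Ug (0 + e.+1)) (Ug 0) by move=> e; exact: U1.
  split => // d; apply: leI; first by move=> X /lo_g0.
  by move=> Y /roU ->; apply: U1.
- have hM : forall e, ~ le (Ug (j.+1 + e.+1)) (Ug j.+1).
    move=> e; apply: (@ro_nle _ _ (Ug j)); first exact/roU.
    by have := IL e; rewrite addSn addnS.
  split => // d; apply: leI.
  + by move=> X /loU ->; rewrite addSn; apply: U1.
  + by move=> Y; rewrite addnS => /roU ->; apply: hM.
Qed.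

Lemma U2 k : le g0 (Ug k.+2).
Proof. exact: (proj1 (U3 0) k). Qed.

Lemma UM j e : ~ le (Ug (j + e.+1)) (Ug j). Proof. exact: (proj2 (U3 j) e). Qed.

Definition gstarU : gstar = Ug 1 := erefl.
Definition gupU : gup = Ug 2 := erefl.

Lemma star_star : eqg (gadd gstar gstar) g0.
Proof.
have h : ident (gneg gstar) gstar.
  apply: identI.
  - move=> X /lo_neg [Y [/ro1 -> ->]]; exists g0; split; [exact/lo1|exact: neg0].
  - move=> X /lo1 ->; exists (gneg g0); split; [apply/lo_neg; exists g0; split => //; exact/ro1|exact: neg0].
  - move=> X /ro_neg [Y [/lo1 -> ->]]; exists g0; split; [exact/ro1|exact: neg0].
  - move=> X /ro1 ->; exists (gneg g0); split; [apply/ro_neg; exists g0; split => //; exact/lo1|exact: neg0].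
rewrite -{2}(ident_eqg h); exact: subg.
Qed.

Lemma star_cancel X : eqg (gadd gstar (gadd gstar X)) X.
Proof. by rewrite -addA star_star g0_add. Qed.

Lemma le_cancel X A B : le (gadd X A) (gadd X B) -> le A B.
Proof.
move=> h; have := le_addl (G:=gneg X) h.
by rewrite -!addA (addC (gneg X)) subg !g0_add.
Qed.

Lemma le0_up : le g0 gup.
Proof. apply: leI; [by move=> X /lo_g0|by move=> Y /ro1 ->; exact: (U1 (k:=0))]. Qed.

Lemma nle_up0 : ~ le gup g0. Proof. exact: (U1 (k:=1)). Qed.
Lemma nle_0star : ~ le g0 gstar.
Proof. apply: (@ro_nle _ _ g0); [exact/ro1|exact: le_refl]. Qed.
Lemma nle_star0 : ~ le gstar g0. Proof. exact: (U1 (k:=0)). Qed.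
Lemma nle_0upstar : ~ le g0 (gadd gup gstar).
Proof.
apply: (@ro_nle _ _ (gadd gstar gstar)).
- by apply/ro_add; left; exists gstar; split => //; exact/ro1.
- by rewrite star_star.
Qed.

Lemma le_add_pos G H : le g0 G -> le g0 H -> le g0 (gadd G H).
Proof. move=> a b; rewrite -(add_g0 g0); exact: le_trans (le_addr a) (le_addl b). Qed.

Lemma le_pos_add G H : le g0 G -> le H (gadd G H).
Proof. move=> a; rewrite -{1}(g0_add H); exact: le_addr. Qed.

Lemma nle_Ustar k : ~ le (Ug k.+2) gstar.
Proof. apply: (@ro_nle _ _ g0); [exact/ro1|exact: U2]. Qed.

Lemma key k : eqg (Ug k.+2) (gadd gup (gadd gstar (Ug k.+1))).
Proof.
elim: k => [|k IH].
-
  by rewrite -gstarU star_star add_g0.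
-
  split.
  + apply: leI.
    * move=> Z /loU ->.
      apply: (@lo_nle _ _ (gadd gup (gadd g0 (Ug k.+2)))).
      - by apply/lo_add; right; exists (gadd g0 (Ug k.+2)); split => //; apply/lo_add; left; exists g0; split => //; exact/lo1.
      - by rewrite g0_add; apply: le_add_pos; [exact: le0_up|exact: (U2 (k:=k))].
    * move=> W hW; apply: (@ro_nle _ _ (Ug k.+2)); first exact/roU.
      case/ro_add: hW => [[G' [/ro1 -> ->]]|[W' [/ro_add [[G'' [/ro1 -> ->]]|[Y' [/roU -> ->]]] ->]]].
      - by rewrite -addA star_star g0_add.
      - by rewrite g0_add; apply: le_pos_add; exact: le0_up.
      - by rewrite -IH.
  + apply: leI.
    * move=> Z hZ.
      case/lo_add: hZ => [[G' [/lo1 -> ->]]|[W' [/lo_add [[G'' [/lo1 -> ->]]|[Y' [/loU -> ->]]] ->]]].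
      -
        rewrite g0_add IH -addA (addC gstar gup) addA star_cancel.
        apply: (@ro_nle _ _ (gadd gstar (Ug k.+1))).
        { by apply/ro_add; left; exists gstar; split => //; exact/ro1. }
        apply: leI.
        { move=> V /lo_add [[G3 [/lo1 -> ->]]|[Y3 [/loU -> ->]]].
          - rewrite g0_add; have := UM (j:=k.+1) (e:=1); by rewrite addn2.
          - by rewrite add_g0; apply: nle_Ustar. }
        { move=> V /roU ->; rewrite IH => h.
          have : le (gadd (gadd gstar (Ug k.+1)) gup) (gadd (gadd gstar (Ug k.+1)) g0).
            by rewrite add_g0 [X in le X _]addC.
          by move/le_cancel; apply: nle_up0. }
      -
        rewrite g0_add.
        apply: (@ro_nle _ _ (gadd gstar (Ug k.+2))).
        { by apply/ro_add; left; exists gstar; split => //; exact/ro1. }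
        apply: leI.
        { move=> V /lo_add [[G3 [/lo1 -> ->]]|[Y3 [/loU -> ->]]].
          - rewrite g0_add; have := UM (j:=k.+2) (e:=0); by rewrite addn1.
          - by rewrite add_g0; apply: nle_Ustar. }
        { move=> V /roU -> h.
          have : le (gadd (Ug k.+2) g0) (gadd (Ug k.+2) gstar) by rewrite add_g0 [X in le _ X]addC.
          by move/le_cancel; apply: nle_0star. }
      -
        apply: (@ro_nle _ _ (gadd gstar (gadd gstar g0))).
        { by apply/ro_add; left; exists gstar; split => //; exact/ro1. }
        by rewrite add_g0 star_star; apply: U2.
    * move=> V /roU -> h.
      have : le (gadd (Ug k.+2) g0) (gadd (Ug k.+2) (gadd gup gstar)).
        by rewrite add_g0 [X in le _ X]addC addA.
      by move/le_cancel; apply: nle_0upstar.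
Qed.

Lemma mul_upS m : mul_up m.+1 = gadd gup (mul_up m). Proof. by []. Qed.

Lemma mulU m : (odd m -> eqg (mul_up m) (Ug m.+1)) /\
               (~~ odd m -> eqg (gadd (mul_up m) gstar) (Ug m.+1)).
Proof.
elim: m => [|m [IH1 IH2]].
- by split => // _; rewrite g0_add.
- split => hm; rewrite mul_upS.
  + have hm' : ~~ odd m by move: hm; rewrite oddS.
    by rewrite key -(IH2 hm') (addC (mul_up m) gstar) star_cancel.
  + have hm' : odd m by move: hm; rewrite oddS negbK.
    by rewrite key -(IH1 hm') addA (addC (mul_up m) gstar).
Qed.

Definition mkG (sL sR : seq game) : game :=
  Game (fun i : 'I_(size sL) => nth g0 sL i) (fun j : 'I_(size sR) => nth g0 sR j).

Lemma nth_In (s : seq game) X : (exists i : 'I_(size s), nth g0 s i = X) <-> List.In X s.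
Proof.
split.
- case=> [[i hi] <-] /=; elim: s i hi => [|x s IH] [|i] //= hi.
  + by left.
  + by right; apply: IH.
- elim: s => [|x s IH] //= [->|/IH [[i hi] <-]].
  + by exists (Ordinal (ltn0Sn (size s))).
  + by exists (Ordinal (hi : i.+1 < (size s).+1)).
Qed.

Lemma lo_mkG sL sR X : lo (mkG sL sR) X <-> List.In X sL.
Proof. exact: nth_In. Qed.
Lemma ro_mkG sL sR X : ro (mkG sL sR) X <-> List.In X sR.
Proof. exact: nth_In. Qed.

Fixpoint Qf (k a b c : nat) : game :=
  match k with
  | 0 => g0
  | k'.+1 =>
    if a + b + c == 0 then g0 else
    mkG (g0 :: (if a is a'.+1 then [:: Qf k' a' b c] else [::]) ++
               (if c is c'.+1 then [:: Qf k' a b c'] else [::]))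
        ((if b is b'.+1 then [:: Qf k' a b' c] else [::]) ++
         (if c is c'.+1 then [:: Qf k' a b c'] else [::]))
  end.

Definition Q a b c := Qf (a + b + c) a b c.

Lemma Qf_fuel k k' a b c : a + b + c <= k -> a + b + c <= k' -> Qf k a b c = Qf k' a b c.
Proof.
elim: k k' a b c => [|k IH] k' a b c h h'.
- move: h; rewrite leqn0 => /eqP hz.
  by case: k' {h'} => //= k'; rewrite hz.
- case E: (a + b + c == 0).
  + by case: k' {h'} => [|k'] /=; rewrite E.
  + case: k' h' => [|k'] h'; first by move: h'; rewrite leqn0 E.
    rewrite /= E; congr (mkG (g0 :: _ ++ _) (_ ++ _)).
      - case: a h h' {E} => [|a] h h' //; rewrite (IH k') //; rewrite -ltnS; exact: leq_trans h.
      - case: c h h' {E} => [|c] h h' //; rewrite (IH k') //; rewrite -ltnS.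
        + by apply: leq_trans h; rewrite addnS.
        + by apply: leq_trans h'; rewrite addnS.
      - case: b h h' {E} => [|b] h h' //; rewrite (IH k') //; rewrite -ltnS.
        + by apply: leq_trans h; rewrite addnS addSn.
        + by apply: leq_trans h'; rewrite addnS addSn.
      - case: c h h' {E} => [|c] h h' //; rewrite (IH k') //; rewrite -ltnS.
        + by apply: leq_trans h; rewrite addnS.
        + by apply: leq_trans h'; rewrite addnS.
Qed.

Lemma QfE k a b c : a + b + c = k.+1 ->
  Q a b c = mkG (g0 :: (if a is a'.+1 then [:: Q a' b c] else [::]) ++
               (if c is c'.+1 then [:: Q a b c'] else [::]))
        ((if b is b'.+1 then [:: Q a b' c] else [::]) ++
         (if c is c'.+1 then [:: Q a b c'] else [::])).
Proof.
move=> E; rewrite /Q E /= E /=.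
congr (mkG (g0 :: _ ++ _) (_ ++ _)).
- case: a E => [|a] E //; rewrite /Q (Qf_fuel (k' := a + b + c)) //.
  by rewrite -ltnS -E.
- case: c E => [|c] E //; rewrite /Q (Qf_fuel (k' := a + b + c)) //.
  by rewrite -ltnS -E addnS.
- case: b E => [|b] E //; rewrite /Q (Qf_fuel (k' := a + b + c)) //.
  by rewrite -ltnS -E addnS addSn.
- case: c E => [|c] E //; rewrite /Q (Qf_fuel (k' := a + b + c)) //.
  by rewrite -ltnS -E addnS.
Qed.

Lemma Q000 : Q 0 0 0 = g0. Proof. by []. Qed.

Lemma loQ a b c X : lo (Q a b c) X <->
  0 < a + b + c /\ (X = g0 \/ (0 < a /\ X = Q a.-1 b c) \/ (0 < c /\ X = Q a b c.-1)).
Proof.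
case E: (a + b + c) => [|k].
- have [-> [-> ->]] : a = 0 /\ b = 0 /\ c = 0.
    by move: E; case: a => [|a] //; case: b => [|b] //; case: c.
  by rewrite Q000; split => [/lo_g0|[]].
- rewrite (QfE E) lo_mkG /=; split.
  + case=> [<-|]; first by split => //; left.
    move/List.in_app_iff => [].
    * by case: a {E} => [|a] //= [<-|] //; split => //; right; left.
    * by case: c {E} => [|c] //= [<-|] //; split => //; right; right.
  + case=> _ [->|[[ha ->]|[hc ->]]]; first by left.
    * right; apply/List.in_app_iff; left.
      by case: a ha {E} => [|a] //= _; left.
    * right; apply/List.in_app_iff; right.
      by case: c hc {E} => [|c] //= _; left.
Qed.

Lemma roQ a b c X : ro (Q a b c) X <->
  (0 < b /\ X = Q a b.-1 c) \/ (0 < c /\ X = Q a b c.-1).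
Proof.
case E: (a + b + c) => [|k].
- have [-> [-> ->]] : a = 0 /\ b = 0 /\ c = 0.
    by move: E; case: a => [|a] //; case: b => [|b] //; case: c.
  by rewrite Q000; split => [/ro_g0|[[]|[]]].
- rewrite (QfE E) ro_mkG /=; split.
  + move/List.in_app_iff => [].
    * by case: b {E} => [|b] //= [<-|] //; left.
    * by case: c {E} => [|c] //= [<-|] //; right.
  + case=> [[hb ->]|[hc ->]].
    * apply/List.in_app_iff; left.
      by case: b hb {E} => [|b] //= _; left.
    * apply/List.in_app_iff; right.
      by case: c hc {E} => [|c] //= _; left.
Qed.

Lemma lo_Q0 a b c : 0 < a + b + c -> lo (Q a b c) g0.
Proof. by move=> h; apply/loQ; split => //; left. Qed.
Lemma lo_Qa a b c : 0 < a -> lo (Q a b c) (Q a.-1 b c).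
Proof. by move=> h; apply/loQ; split; [rewrite -addnA; case: a h|right; left]. Qed.
Lemma lo_Qc a b c : 0 < c -> lo (Q a b c) (Q a b c.-1).
Proof. by move=> h; apply/loQ; split; [rewrite addn_gt0 h orbT|right; right]. Qed.
Lemma ro_Qb a b c : 0 < b -> ro (Q a b c) (Q a b.-1 c).
Proof. by move=> h; apply/roQ; left. Qed.
Lemma ro_Qc a b c : 0 < c -> ro (Q a b c) (Q a b c.-1).
Proof. by move=> h; apply/roQ; right. Qed.

Lemma Q0 a b c : 0 < a + b + c -> ~ le (Q a b c) g0.
Proof. by move=> h; apply: lo_not_le; apply: lo_Q0. Qed.

Lemma sum_pos_a a b c : 0 < a -> 0 < a + b + c.
Proof. by move=> h; rewrite -addnA; case: a h. Qed.

Lemma Qpos a b c : 0 < a -> le g0 (Q a b c).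
Proof.
move=> ha; apply: leI; first by move=> X /lo_g0.
by move=> Y /roQ [[_ ->]|[_ ->]]; apply: Q0; apply: sum_pos_a.
Qed.

Lemma Qstar1 a b c : 0 < a -> ~ le (Q a b c) gstar.
Proof. move=> ha; apply: (@ro_nle _ _ g0); [exact/ro1|exact: Qpos]. Qed.

Lemma Qstar2 a b c : 0 < a -> le gstar (Q a b c).
Proof.
move=> ha; apply: leI.
- by move=> X /lo1 ->; apply: Q0; apply: sum_pos_a.
- by move=> Y /roQ [[_ ->]|[_ ->]]; apply: Qstar1.
Qed.

Ltac sz := match goal with hs : is_true (_ <= _) |- _ => move: hs; clear; lia end.

Lemma Pfam N : forall x y a b c, x + y + a + b + c <= N -> 0 < a ->
  ~ le (Q a b c) (Q 0 x y) /\ le (Q 0 x y) (Q a b c) /\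
  ~ le (Q a b c) (gadd (Q 0 x y) gstar) /\ le (gadd (Q 0 x y) gstar) (Q a b c).
Proof.
elim: N => [|N IH] x y a b c hs ha.
- by move: hs ha; lia.
- have P2 : ~ le (Q a b c) (Q 0 x y).
    case: x hs => [|x] hs.
    + case: y hs => [|y] hs.
      * by rewrite Q000; apply: Q0; apply: sum_pos_a.
      * apply: (@ro_nle _ _ (Q 0 0 y)); first exact: ro_Qc.
        by have [_ [h _]] := IH 0 y a b c ltac:(sz) ha.
    + apply: (@ro_nle _ _ (Q 0 x y)); first exact: ro_Qb.
      by have [_ [h _]] := IH x y a b c ltac:(sz) ha.
  have P1 : le (Q 0 x y) (Q a b c).
    apply: leI.
    + move=> X /loQ [_ [->|[[//]|[hy ->]]]]; first by apply: Q0; apply: sum_pos_a.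
      clear P2; case: y hy hs => [|y] // _ hs.
      by have [h _] := IH x y a b c ltac:(sz) ha.
    + move=> Y /roQ [[hb ->]|[hc ->]].
      * clear P2; case: b hb hs => [|b] // _ hs.
        by have [h _] := IH x y a b c ltac:(sz) ha.
      * clear P2; case: c hc hs => [|c] // _ hs.
        by have [h _] := IH x y a b c ltac:(sz) ha.
  have P2s : ~ le (Q a b c) (gadd (Q 0 x y) gstar).
    apply: (@ro_nle _ _ (gadd (Q 0 x y) g0)).
    + by apply/ro_add; right; exists g0; split => //; exact/ro1.
    + by rewrite add_g0.
  do 3 (split => //).
  apply: leI.
  + move=> X /lo_add [[X' [/loQ [_ [->|[[//]|[hy ->]]]] ->]]|[X'' [/lo1 -> ->]]].
    * by rewrite g0_add; apply: Qstar1.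
    * clear P1 P2 P2s; case: y hy hs => [|y] // _ hs.
      by have [_ [_ [h _]]] := IH x y a b c ltac:(sz) ha.
    * by rewrite add_g0.
  + move=> Y /roQ [[hb ->]|[hc ->]].
    * clear P1 P2 P2s; case: b hb hs => [|b] // _ hs.
      by have [_ [_ [h _]]] := IH x y a b c ltac:(sz) ha.
    * clear P1 P2 P2s; case: c hc hs => [|c] // _ hs.
      by have [_ [_ [h _]]] := IH x y a b c ltac:(sz) ha.
Qed.

Lemma P1 x y a b c : 0 < a -> le (Q 0 x y) (Q a b c).
Proof. by move=> ha; have [_ [h _]] := @Pfam (x+y+a+b+c) x y a b c (leqnn _) ha. Qed.
Lemma P2 x y a b c : 0 < a -> ~ le (Q a b c) (Q 0 x y).
Proof. by move=> ha; have [h _] := @Pfam (x+y+a+b+c) x y a b c (leqnn _) ha. Qed.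
Lemma P1s x y a b c : 0 < a -> le (gadd (Q 0 x y) gstar) (Q a b c).
Proof. by move=> ha; have [_ [_ [_ h]]] := @Pfam (x+y+a+b+c) x y a b c (leqnn _) ha. Qed.

Lemma QU N : forall b c, b + c <= N -> eqg (Q 0 b c) (Ug (b + c)).
Proof.
elim: N => [|N IH] b c hs.
- have [-> ->] : b = 0 /\ c = 0 by move: hs; lia.
  by rewrite Q000.
- case E: (b + c) => [|k].
  + have [-> ->] : b = 0 /\ c = 0 by move: E; lia.
    by rewrite Q000.
  + have IHo : forall b' c', b' + c' = k -> eqg (Q 0 b' c') (Ug k).
      by move=> b' c' e; rewrite -e; apply: IH; move: hs E e; lia.
    have hr : exists Z, ro (Q 0 b c) Z /\ eqg Z (Ug k).
      case: b E {hs} => [|b] E.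
      * case: c E => [|c] // E; exists (Q 0 0 c); split; first exact: ro_Qc.
        apply: IHo; move: E; lia.
      * exists (Q 0 b c); split; first exact: ro_Qb.
        apply: IHo; move: E; lia.
    split; apply: leI.
    * move=> X /loQ [_ [->|[[//]|[hc ->]]]]; first exact: U1.
      rewrite (IHo b c.-1); last by move: E hc; lia.
      by have := UM (j:=k) (e:=0); rewrite addn1.
    * move=> Y /roU ->; case: hr => Z [hZ hZe].
      by apply: (ro_nle hZ); rewrite hZe.
    * by move=> X /loU ->; apply: Q0; rewrite add0n E.
    * move=> Y /roQ [[hb ->]|[hc ->]].
      - rewrite (IHo b.-1 c); last by move: E hb; lia.
        by apply: ro_not_le; apply/roU.
      - rewrite (IHo b c.-1); last by move: E hc; lia.
        by apply: ro_not_le; apply/roU.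
Qed.

Lemma lo_addR G H X : lo H X -> lo (gadd G H) (gadd G X).
Proof. by move=> h; apply/lo_add; right; exists X. Qed.
Lemma lo_addL G H X : lo G X -> lo (gadd G H) (gadd X H).
Proof. by move=> h; apply/lo_add; left; exists X. Qed.
Lemma ro_addR G H X : ro H X -> ro (gadd G H) (gadd G X).
Proof. by move=> h; apply/ro_add; right; exists X. Qed.
Lemma ro_addL G H X : ro G X -> ro (gadd G H) (gadd X H).
Proof. by move=> h; apply/ro_add; left; exists X. Qed.
Lemma lo_star0 G : lo (gadd G gstar) (gadd G g0).
Proof. by apply: lo_addR; apply/lo1. Qed.
Lemma ro_star0 G : ro (gadd G gstar) (gadd G g0).
Proof. by apply: ro_addR; apply/ro1. Qed.

Lemma mainA N : forall a b c, a + b + c <= N -> 0 < a ->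
  (odd c -> eqg (Q a b c) (gadd (Q a b 0) gstar)) /\ (~~ odd c -> eqg (Q a b c) (Q a b 0)).
Proof.
elim: N => [|N IH] a b c hs ha; first by move: hs ha; lia.
case: c hs => [|c] hs; first by split.
have IHc := IH a b c ltac:(move: hs; lia) ha.
have IHa : 1 < a -> (odd c.+1 -> eqg (Q a.-1 b c.+1) (gadd (Q a.-1 b 0) gstar)) /\
                    (~~ odd c.+1 -> eqg (Q a.-1 b c.+1) (Q a.-1 b 0)).
  by move=> h; apply: IH; move: hs h; lia.
have IHb : 0 < b -> (odd c.+1 -> eqg (Q a b.-1 c.+1) (gadd (Q a b.-1 0) gstar)) /\
                    (~~ odd c.+1 -> eqg (Q a b.-1 c.+1) (Q a b.-1 0)).
  by move=> h; apply: IH; move: hs h ha; lia.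
have hsum : 0 < a + b + c.+1 by move: ha; lia.
split => hc.
- have eqc : eqg (Q a b c) (Q a b 0) by apply: (proj2 IHc); move: hc; rewrite oddS.
  have eqa : 1 < a -> eqg (Q a.-1 b c.+1) (gadd (Q a.-1 b 0) gstar) by move=> h; apply: (proj1 (IHa h)).
  have eqb : 0 < b -> eqg (Q a b.-1 c.+1) (gadd (Q a b.-1 0) gstar) by move=> h; apply: (proj1 (IHb h)).
  split; apply: leI.
  + move=> X /loQ [_ [->|[[_ ->]|[_ ->]]]].
    * apply: (lo_nle (lo_star0 _)); rewrite add_g0; exact: Qpos.
    * have [a1|a2] : a = 1 \/ 1 < a by move: ha; lia.
      - subst a; apply: (lo_nle (lo_star0 _)); rewrite add_g0; exact: P1.
      - apply: (lo_nle (lo_addL _ (lo_Qa b 0 ha))); rewrite eqa //.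
    * apply: (lo_nle (lo_star0 _)); by rewrite add_g0 /= eqc.
  + move=> Y /ro_add [[Y' [/roQ [[hb ->]|[//]] ->]]|[Y'' [/ro1 -> ->]]].
    * apply: (ro_nle (ro_Qb a c.+1 hb)); by rewrite eqb.
    * apply: (ro_nle (ro_Qc a b (ltn0Sn c))); by rewrite add_g0 /= eqc.
  + move=> X /lo_add [[X' [/loQ [_ [->|[[_ ->]|[//]]]] ->]]|[X'' [/lo1 -> ->]]].
    * rewrite g0_add; apply: (lo_nle (lo_Qc a b (ltn0Sn c))); exact: Qstar2.
    * have [a1|a2] : a = 1 \/ 1 < a by move: ha; lia.
      - subst a; apply: (lo_nle (lo_Qc 1 b (ltn0Sn c))); exact: P1s.
      - apply: (lo_nle (lo_Qa b c.+1 ha)); by rewrite eqa.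
    * rewrite add_g0; apply: (lo_nle (lo_Qc a b (ltn0Sn c))); by rewrite /= eqc.
  + move=> Y /roQ [[hb ->]|[_ ->]].
    * rewrite eqb //; apply: ro_not_le; apply: ro_addL; exact: ro_Qb.
    * rewrite /= eqc; apply: (ro_nle (ro_star0 _)); by rewrite add_g0.
- have eqc : eqg (Q a b c) (gadd (Q a b 0) gstar) by apply: (proj1 IHc); move: hc; rewrite oddS negbK.
  have eqa : 1 < a -> eqg (Q a.-1 b c.+1) (Q a.-1 b 0) by move=> h; apply: (proj2 (IHa h)).
  have eqb : 0 < b -> eqg (Q a b.-1 c.+1) (Q a b.-1 0) by move=> h; apply: (proj2 (IHb h)).
  have hsum0 : 0 < a + b + 0 by move: ha; lia.
  split; apply: leI.
  + move=> X /loQ [_ [->|[[_ ->]|[_ ->]]]].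
    * exact: (lo_nle (lo_Q0 hsum0)).
    * have [a1|a2] : a = 1 \/ 1 < a by move: ha; lia.
      - subst a; exact: P2.
      - apply: (lo_nle (lo_Qa b 0 ha)); by rewrite eqa.
    * rewrite /= eqc; apply: (ro_nle (ro_star0 _)); by rewrite add_g0.
  + move=> Y /roQ [[hb ->]|[//]].
    apply: (ro_nle (ro_Qb a c.+1 hb)); by rewrite eqb.
  + move=> X /loQ [_ [->|[[_ ->]|[//]]]].
    * exact: (lo_nle (lo_Q0 hsum)).
    * have [a1|a2] : a = 1 \/ 1 < a by move: ha; lia.
      - subst a; apply: (lo_nle (lo_Qc 1 b (ltn0Sn c))); exact: P1.
      - apply: (lo_nle (lo_Qa b c.+1 ha)); by rewrite eqa.
  + move=> Y /roQ [[hb ->]|[_ ->]].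
    * rewrite eqb //; apply: ro_not_le; exact: ro_Qb.
    * rewrite /= eqc; apply: (lo_nle (lo_star0 _)); by rewrite add_g0.
Qed.

Lemma tup_ex (T : eqType) (s : seq T) (f : T -> game) X :
  (exists i : 'I_(size s), f (tnth (in_tuple s) i) = X) <-> exists v, v \in s /\ X = f v.
Proof.
split.
- by case=> i <-; exists (tnth (in_tuple s) i); split => //; exact: mem_tnth.
- case=> v [hv ->]; have hi : index v s < size s by rewrite index_mem.
  exists (Ordinal hi).
  by rewrite (tnth_nth v) /= nth_index.
Qed.

Lemma dom_auxS (V : finType) (adj : rel V) col W k D :
  dom_aux adj col W k.+1 D =
  let sL := [seq v <- enum V | playable adj W D v && left_col (col v)] in
  let sR := [seq v <- enum V | playable adj W D v && right_col (col v)] in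
  Game (fun i : 'I_(size sL) => dom_aux adj col W k (D :|: cnbhd adj W (tnth (in_tuple sL) i)))
       (fun j : 'I_(size sR) => dom_aux adj col W k (D :|: cnbhd adj W (tnth (in_tuple sR) j))).
Proof. by []. Qed.

Lemma lo_dom (V : finType) (adj : rel V) col W k D X :
  lo (dom_aux adj col W k.+1 D) X <->
  exists v, playable adj W D v && left_col (col v) /\ X = dom_aux adj col W k (D :|: cnbhd adj W v).
Proof.
rewrite dom_auxS /=.
rewrite (tup_ex _ (fun v => dom_aux adj col W k (D :|: cnbhd adj W v))).
by split; case=> v [hv ->]; exists v; split => //; move: hv; rewrite mem_filter mem_enum andbT.
Qed.

Lemma ro_dom (V : finType) (adj : rel V) col W k D X :
  ro (dom_aux adj col W k.+1 D) X <->
  exists v, playable adj W D v && right_col (col v) /\ X = dom_aux adj col W k (D :|: cnbhd adj W v).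
Proof.
rewrite dom_auxS /=.
rewrite (tup_ex _ (fun v => dom_aux adj col W k (D :|: cnbhd adj W v))).
by split; case=> v [hv ->]; exists v; split => //; move: hv; rewrite mem_filter mem_enum andbT.
Qed.

Lemma left_swap c : left_col (swap_col c) = right_col c. Proof. by case: c. Qed.
Lemma right_swap c : right_col (swap_col c) = left_col c. Proof. by case: c. Qed.

Lemma dom_swap (V : finType) (adj : rel V) col W k D :
  ident (dom_aux adj (fun x => swap_col (col x)) W k D) (gneg (dom_aux adj col W k D)).
Proof.
elim: k D => [|k IH] D; first exact: ident_sym neg0.
apply: identI.
- move=> X /lo_dom [v [hv ->]]; exists (gneg (dom_aux adj col W k (D :|: cnbhd adj W v))).
  split; last exact: IH.
  by apply/lo_neg; eexists; split; last reflexivity; apply/ro_dom; exists v; rewrite -left_swap.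
- move=> Y /lo_neg [Z [/ro_dom [v [hv ->]] ->]].
  exists (dom_aux adj (fun x => swap_col (col x)) W k (D :|: cnbhd adj W v)); split; last exact: IH.
  by apply/lo_dom; exists v; rewrite left_swap.
- move=> X /ro_dom [v [hv ->]]; exists (gneg (dom_aux adj col W k (D :|: cnbhd adj W v))).
  split; last exact: IH.
  by apply/ro_neg; eexists; split; last reflexivity; apply/lo_dom; exists v; rewrite -right_swap.
- move=> Y /ro_neg [Z [/lo_dom [v [hv ->]] ->]].
  exists (dom_aux adj (fun x => swap_col (col x)) W k (D :|: cnbhd adj W v)); split; last exact: IH.
  by apply/ro_dom; exists v; rewrite right_swap.
Qed.

Lemma dom_done (V : finType) (adj : rel V) col (W D : {set V}) k :
  W \subset D -> ident (dom_aux adj col W k D) g0.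
Proof.
move=> hW; case: k => [|k]; first exact: ident_refl.
have np : forall v, ~~ playable adj W D v.
  move=> v; rewrite /playable negb_and negbK; apply/orP; right.
  apply: subset_trans hW; apply/subsetP => u; rewrite inE; by case/andP.
apply: identI.
- by move=> X /lo_dom [v [/andP [hv _]]]; move: (np v); rewrite hv.
- by move=> Y /lo_g0.
- by move=> X /ro_dom [v [/andP [hv _]]]; move: (np v); rewrite hv.
- by move=> Y /ro_g0.
Qed.


Definition cnt n (col : option 'I_n -> colour) (W D : {set option 'I_n}) (x : colour) : nat :=
  #|[set i : 'I_n | (Some i \in W) && (Some i \notin D) && (col (Some i) == x)]|.

Lemma cnb_None n (W : {set option 'I_n}) : cnbhd (@star_adj n) W None = W.
Proof. by apply/setP => u; rewrite inE; case: u => [i|] /=; rewrite andbT. Qed.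

Lemma in_cnb_Some n (W : {set option 'I_n}) i u :
  (u \in cnbhd (@star_adj n) W (Some i)) = (u \in W) && ((u == Some i) || (u == None)).
Proof. by rewrite inE. Qed.

Lemma cnt_step n col (W D : {set option 'I_n}) i x :
  Some i \in W -> Some i \notin D ->
  cnt col W (D :|: cnbhd (@star_adj n) W (Some i)) x = cnt col W D x - (col (Some i) == x).
Proof.
move=> hW hD; rewrite /cnt.
have -> : [set j : 'I_n | (Some j \in W) && (Some j \notin D :|: cnbhd (@star_adj n) W (Some i))
                          && (col (Some j) == x)]
        = [set j : 'I_n | (Some j \in W) && (Some j \notin D) && (col (Some j) == x)] :\ i.
  apply/setP => j; rewrite !inE /star_adj /=.
  case: (eqVneq j i) => [->|nji]; first by rewrite eqxx hW /= orbT.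
  have -> : (Some j == Some i) = false by apply/eqP => -[]; apply/eqP.
  by rewrite /=; case: (Some j \in W); case: (Some j \in D).
case E: (col (Some i) == x).
- set S := [set j | _].
  have hi : i \in S by rewrite !inE hW hD E.
  rewrite (cardsD1 i S) hi /=; lia.
- rewrite subn0; set S := [set j | _].
  suff -> : S :\ i = S by [].
  apply/setP => j; rewrite !inE.
  by case: (eqVneq j i) => [->|] //=; rewrite E !andbF.
Qed.

Lemma cnt_ex n col (W D : {set option 'I_n}) x :
  0 < cnt col W D x -> exists i, [/\ Some i \in W, Some i \notin D & col (Some i) = x].
Proof.
rewrite /cnt card_gt0 => /set0Pn [i]; rewrite !inE => /andP [/andP [h1 h2] /eqP h3].
by exists i.
Qed.

Lemma cnt_pos n col (W D : {set option 'I_n}) i :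
  Some i \in W -> Some i \notin D -> 0 < cnt col W D (col (Some i)).
Proof. by move=> h1 h2; rewrite /cnt card_gt0; apply/set0Pn; exists i; rewrite !inE h1 h2 eqxx. Qed.

Lemma fuel_dec (V : finType) (adj : rel V) (W D : {set V}) v :
  playable adj W D v -> #|W :\: (D :|: cnbhd adj W v)| < #|W :\: D|.
Proof.
case/andP => _ hv; apply: proper_card; apply/properP; split.
- by apply/subsetP => u; rewrite !inE negb_or; case/andP => /andP [-> _] ->.
- case/subsetPn: hv => u hu hnu; exists u.
  + by rewrite in_setD hnu; move: hu; rewrite inE => /andP [->].
  + by rewrite in_setD in_setU hu orbT.
Qed.

Lemma sum_pos_ex n col (W D : {set option 'I_n}) :
  0 < cnt col W D CA + cnt col W D CB + cnt col W D CC <->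
  exists i, Some i \in W /\ Some i \notin D.
Proof.
split.
- rewrite !addn_gt0 => /orP [/orP [] |] /cnt_ex [i [h1 h2 _]]; by exists i.
- case=> i [h1 h2]; have := cnt_pos col h1 h2.
  case: (col (Some i)) => h; rewrite !addn_gt0 h ?orbT //.
Qed.

Lemma playS n (W D : {set option 'I_n}) i : None \in W -> (None \in D \/ D = set0) ->
  playable (@star_adj n) W D (Some i) = (Some i \in W) && (Some i \notin D).
Proof.
move=> hN hpre; rewrite /playable; case hWi: (Some i \in W) => //=.
case hD: (Some i \in D) => /=.
- apply/negbF; apply/subsetP => u; rewrite in_cnb_Some => /andP [_ /orP [/eqP -> //|/eqP ->]].
  by case: hpre => // hD0; move: hD; rewrite hD0 inE.
- apply/subsetPn; exists (Some i); last by rewrite hD.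
  by rewrite in_cnb_Some hWi eqxx.
Qed.

Lemma playN n col (W D : {set option 'I_n}) : None \in W ->
  (None \in D \/ (D = set0 /\ 0 < cnt col W D CA + cnt col W D CB + cnt col W D CC)) ->
  playable (@star_adj n) W D None = (0 < cnt col W D CA + cnt col W D CB + cnt col W D CC).
Proof.
move=> hN hpre; rewrite /playable hN /= cnb_None.
apply/idP/idP.
- case/subsetPn => [[i|] hi hni].
  + by apply/sum_pos_ex; exists i.
  + by case: hpre => [hD|[_ ->]] //; move: hni; rewrite hD.
- case/sum_pos_ex => i [h1 h2]; apply/subsetPn; by exists (Some i).
Qed.

Lemma star_Q n col (W : {set option 'I_n}) k D : None \in W -> col None = CA ->
  #|W :\: D| < k ->
  (None \in D \/ (D = set0 /\ 0 < cnt col W D CA + cnt col W D CB + cnt col W D CC)) ->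
  ident (dom_aux (@star_adj n) col W k D) (Q (cnt col W D CA) (cnt col W D CB) (cnt col W D CC)).
Proof.
elim: k D => [//|k IH] D hN hA hk hpre.
have hpre' : None \in D \/ D = set0 by case: hpre => [|[]]; auto.
have hpS := fun i => playS i hN hpre'.
have hsum := @playN n col W D hN hpre.
have step : forall i, Some i \in W -> Some i \notin D ->
   ident (dom_aux (@star_adj n) col W k (D :|: cnbhd (@star_adj n) W (Some i)))
     (Q (cnt col W D CA - (col (Some i) == CA)) (cnt col W D CB - (col (Some i) == CB))
        (cnt col W D CC - (col (Some i) == CC))).
  move=> i h1 h2; rewrite -!cnt_step //; apply: IH => //.
  - have : playable (@star_adj n) W D (Some i) by rewrite hpS h1 h2.
    by move/fuel_dec => h; apply: leq_trans h _; rewrite -ltnS.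
  - by left; rewrite in_setU; apply/orP; right; rewrite in_cnb_Some hN eqxx orbT.
apply: identI.
- move=> X /lo_dom [[i|] [/andP [hp hl] ->]].
  + rewrite hpS in hp; case/andP: hp => h1 h2.
    have := step i h1 h2; have := cnt_pos col h1 h2.
    move: hl; case: (col (Some i)) => //= _ hpos hid.
    * exists (Q (cnt col W D CA).-1 (cnt col W D CB) (cnt col W D CC)); split; first exact: lo_Qa.
      by rewrite !subn0 subn1 in hid.
    * exists (Q (cnt col W D CA) (cnt col W D CB) (cnt col W D CC).-1); split; first exact: lo_Qc.
      by rewrite !subn0 subn1 in hid.
  + exists g0; split; first by apply: lo_Q0; rewrite -hsum.
    by apply: dom_done; rewrite cnb_None; apply: subsetUr.
- move=> Y /loQ [hs [->|[[ha ->]|[hc ->]]]].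
  + exists (dom_aux (@star_adj n) col W k (D :|: cnbhd (@star_adj n) W None)); split.
    * by apply/lo_dom; exists None; rewrite hsum hs hA.
    * by apply: dom_done; rewrite cnb_None; apply: subsetUr.
  + have [i [h1 h2 h3]] := cnt_ex ha.
    exists (dom_aux (@star_adj n) col W k (D :|: cnbhd (@star_adj n) W (Some i))); split.
    * by apply/lo_dom; exists (Some i); rewrite hpS h1 h2 h3.
    * by have := step i h1 h2; rewrite h3 /= !subn0 subn1.
  + have [i [h1 h2 h3]] := cnt_ex hc.
    exists (dom_aux (@star_adj n) col W k (D :|: cnbhd (@star_adj n) W (Some i))); split.
    * by apply/lo_dom; exists (Some i); rewrite hpS h1 h2 h3.
    * by have := step i h1 h2; rewrite h3 /= !subn0 subn1.
- move=> X /ro_dom [[i|] [/andP [hp hl] ->]]; last by move: hl; rewrite hA.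
  rewrite hpS in hp; case/andP: hp => h1 h2.
  have := step i h1 h2; have := cnt_pos col h1 h2.
  move: hl; case: (col (Some i)) => //= _ hpos hid.
  * exists (Q (cnt col W D CA) (cnt col W D CB).-1 (cnt col W D CC)); split; first exact: ro_Qb.
    by rewrite !subn0 subn1 in hid.
  * exists (Q (cnt col W D CA) (cnt col W D CB) (cnt col W D CC).-1); split; first exact: ro_Qc.
    by rewrite !subn0 subn1 in hid.
- move=> Y /roQ [[hb ->]|[hc ->]].
  + have [i [h1 h2 h3]] := cnt_ex hb.
    exists (dom_aux (@star_adj n) col W k (D :|: cnbhd (@star_adj n) W (Some i))); split.
    * by apply/ro_dom; exists (Some i); rewrite hpS h1 h2 h3.
    * by have := step i h1 h2; rewrite h3 /= !subn0 subn1.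
  + have [i [h1 h2 h3]] := cnt_ex hc.
    exists (dom_aux (@star_adj n) col W k (D :|: cnbhd (@star_adj n) W (Some i))); split.
    * by apply/ro_dom; exists (Some i); rewrite hpS h1 h2 h3.
    * by have := step i h1 h2; rewrite h3 /= !subn0 subn1.
Qed.

Lemma cnt_T0 n col x : cnt col [set: option 'I_n] set0 x = #|[set i : 'I_n | col (Some i) == x]|.
Proof. by rewrite /cnt; apply: eq_card => i; rewrite !inE. Qed.

Lemma card3 n (col : option 'I_n -> colour) :
  #|[set i : 'I_n | col (Some i) == CA]| + #|[set i : 'I_n | col (Some i) == CB]|
  + #|[set i : 'I_n | col (Some i) == CC]| = n.
Proof.
transitivity #|[set: 'I_n]|; last by rewrite cardsT card_ord.
set SA := [set i : 'I_n | col (Some i) == CA].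
set SB := [set i : 'I_n | col (Some i) == CB].
set SC := [set i : 'I_n | col (Some i) == CC].
rewrite -(cardsID SA [set: 'I_n]).
set R := [set: 'I_n] :\: SA.
rewrite -(cardsID SB R).
have e1 : #|[set: 'I_n] :&: SA| = #|SA| by apply: eq_card => i; rewrite !inE.
have e2 : #|R :&: SB| = #|SB| by apply: eq_card => i; rewrite !inE; case: (col (Some i)).
have e3 : #|R :\: SB| = #|SC| by apply: eq_card => i; rewrite !inE; case: (col (Some i)).
by rewrite e1 e2 e3 addnA.
Qed.

Theorem theorem8 (n : nat) (col : option 'I_n -> colour) :
  let a := #|[set i : 'I_n | col (Some i) == CA]| in
  let c := #|[set i : 'I_n | col (Some i) == CC]| in
  let G := dom_game (@star_adj n) col setT in
  (1 <= c)%N ->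
  (col None = CA ->
     (a = 0 ->
        (~~ odd n -> game_eq G (mul_up n.-1)) /\
        (odd n -> game_eq G (gadd (mul_up n.-1) gstar))) /\
     ((0 < a)%N ->
        let J := dom_game (@star_adj n) col
                   [set x | (x == None) || (col x != CC)] in
        (~~ odd c -> game_eq G J) /\
        (odd c -> game_eq G (gadd J gstar))))
  /\
  (col None = CB ->
     game_eq G (gneg (dom_game (@star_adj n) (fun x => swap_col (col x)) setT))).
Proof.
move=> a c G hc; split.
- move=> hA.
  set b := #|[set i : 'I_n | col (Some i) == CB]|.
  have hn : a + b + c = n by exact: card3.
  have hG : ident G (Q a b c).
    have := @star_Q n col setT #|{: option 'I_n}|.+1 set0 (in_setT _) hA.
    rewrite !cnt_T0 -/a -/b -/c; apply.
    + by rewrite ltnS max_card.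
    + by right; split => //; move: hc; lia.
  split.
  + move=> ha0.
    have hU : eqg G (Ug n).
      have e : b + c = n by move: hn; rewrite ha0.
      have := @QU (b + c) b c (leqnn _); rewrite e => hq.
      by rewrite (ident_eqg hG) ha0.
    case: n col a c G hc hA b hn hG ha0 hU => [|m] col a c G hc hA b hn hG ha0 hU.
    * by move: hn hc; lia.
    * have [h1 h2] := mulU m.
      split => hm; apply/game_eqE; rewrite hU /=.
      - by rewrite h1 //; move: hm; rewrite /= negbK.
      - by rewrite h2 //; move: hm; rewrite /=.
  + move=> ha J.
    have hJ : ident J (Q a b 0).
      set W := [set x | (x == None) || (col x != CC)].
      have e : forall x, cnt col W set0 x = #|[set i : 'I_n | col (Some i) == x]| * (x != CC).
        move=> x; case: (eqVneq x CC) => [->|hx] /=.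
        - rewrite muln0; apply/eqP; rewrite cards_eq0; apply/eqP/setP => i; rewrite !inE.
          by case: (col (Some i)).
        - rewrite muln1 /cnt; apply: eq_card => i; rewrite !inE.
          by case: x hx => //; case: (col (Some i)).
      have := @star_Q n col W #|{: option 'I_n}|.+1 set0 _ hA.
      rewrite !e /= !muln1 muln0 -/a -/b; apply.
      + by rewrite inE eqxx.
      + by rewrite ltnS max_card.
      + by right; split => //; move: ha; lia.
    have [hodd hev] := @mainA (a + b + c) a b c (leqnn _) ha.
    split => hcc; apply/game_eqE; rewrite (ident_eqg hG) (ident_eqg hJ).
    * exact: hev.
    * exact: hodd.
- move=> hB.
  have e : (fun x => swap_col (swap_col (col x))) = col.
    by apply: functional_extensionality => x; case: (col x).
  have := dom_swap (@star_adj n) (fun x => swap_col (col x)) [set: option 'I_n]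
            #|{: option 'I_n}|.+1 set0.
  rewrite e => h; apply/game_eqE; exact: ident_eqg h.
Qed.
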